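(* Consider $\dot x(t)=A_{\sigma(t)}x(t)+B_{\sigma(t)}u(t)$ with $A_i\in\mathbb{R}^{n\times n}$, $B_i\in\mathbb{R}^{n\times m}$, $i=1,\dots,N$, and let $\bar T>0$. Assume there exist continuously differentiable $X_i:[0,\bar T]\to\mathbb{D}^n$ with $X_i(\tau)$ nonsingular for all $\tau$ and $X_i(\bar T)\in\mathbb{D}^n_{\succ0}$, continuous $U_i:[0,\bar T]\to\mathbb{R}^{m\times n}$ ($i=1,\dots,N$) and scalars $\varepsilon,\alpha>0$ such that for all $\tau\in[0,\bar T]$ and all $i$: $A_iX_i(\tau)+B_iU_i(\tau)+\alpha I_n\ge0$, $\big[A_iX_i(\bar T)+B_iU_i(\bar T)\big]\mathbf{1}_n<0$, $\big[-\dot X_i(\tau)+A_iX_i(\tau)+B_iU_i(\tau)\big]\mathbf{1}_n<0$, and for all $i\ne j$: $\big[X_j(\bar T)-X_i(0)+\varepsilon I_n\big]\mathbf{1}_n\le0$. Let $K_i(\tau)=U_i(\tau)X_i(\tau)^{-1}$ and apply $u(t_k+\tau)=K_{\sigma(t_k^+)}(\tau)x(t_k+\tau)$ for $\tau\in[0,\bar T)$ and $u(t_k+\tau)=K_{\sigma(t_k^+)}(\bar T)x(t_k+\tau)$ for $\tau\in[\bar T,t_{k+1}-t_k)$, where $\sigma(t_k^+)$ is the mode active on $(t_k,t_{k+1}]$. Then the closed-loop system is positive and asymptotically stable under minimum dwell-time $\bar T$.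
   Context: $\mathbb{D}^n$ denotes $n\times n$ diagonal matrices, $\mathbb{D}^n_{\succ0}$ those with positive diagonal. Matrix/vector inequalities are entrywise; $\mathbf{1}_n$ is the vector of ones. The switching signal $\sigma$ is piecewise constant, left-continuous, with strictly increasing unbounded switching instants $t_k$. Positivity means $x(t)\ge0$ for all $t$ whenever $x(0)\ge0$. Asymptotic stability under minimum dwell-time $\bar T$ means global asymptotic stability of the origin for every switching signal with $\bar T\le t_{k+1}-t_k<\infty$. *)

(* Defs.v *)
From Stdlib Require Import Reals Lra.
Open Scope R_scope.

(* Vectors in R^n are functions nat -> R (only indices < n matter);
   n x m matrices are functions nat -> nat -> R.
   Families indexed by the mode i carry the mode as first argument. *)

Fixpoint rsum (n : nat) (f : nat -> R) : R :=
  match n with O => 0 | S k => rsum k f + f k end.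

Definition cont_on (a b : R) (f : R -> R) : Prop :=
  forall x, a <= x <= b -> forall e, 0 < e -> exists d, 0 < d /\
    forall y, a <= y <= b -> Rabs (y - x) < d -> Rabs (f y - f x) < e.

Definition cont_from0 (f : R -> R) : Prop :=
  forall x, 0 <= x -> forall e, 0 < e -> exists d, 0 < d /\
    forall y, 0 <= y -> Rabs (y - x) < d -> Rabs (f y - f x) < e.

(* X i tau : diagonal of X_i(tau) (element of D^n);  U i tau : m x n matrix.
   K_i(tau) = U_i(tau) X_i(tau)^{-1}, entry (l,c) = U_i(tau)_{lc} / X_i(tau)_c *)
Definition Kgain (U : nat -> R -> nat -> nat -> R) (X : nat -> R -> nat -> R)
  (i : nat) (tau : R) (l c : nat) : R := U i tau l c / X i tau c.

Definition cl_entry (m : nat) (A B : nat -> nat -> nat -> R)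
  (U : nat -> R -> nat -> nat -> R) (X : nat -> R -> nat -> R)
  (i : nat) (tau : R) (r c : nat) : R :=
  A i r c + rsum m (fun l => B i r l * Kgain U X i tau l c).

(* Switching signal sigma with modes in {0,..,N-1}, given by its switching
   instants t k (t 0 = 0 the initial time) and md k = sigma(t_k^+), the mode
   active on (t_k, t_{k+1}] (sigma left-continuous, piecewise constant).
   Switching instants are genuine switches, strictly increasing, unbounded,
   and respect the minimum dwell-time Tbar. *)
Definition dwell_switching (N : nat) (Tbar : R) (t : nat -> R) (md : nat -> nat)
  : Prop :=
  t O = 0 /\
  (forall k, (md k < N)%nat) /\
  (forall k, md (S k) <> md k) /\
  (forall k, t k < t (S k)) /\
  (forall M, exists k, M < t k) /\
  (forall k, Tbar <= t (S k) - t k).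

Definition cl_solution (n m : nat) (A B : nat -> nat -> nat -> R)
  (U : nat -> R -> nat -> nat -> R) (X : nat -> R -> nat -> R) (Tbar : R)
  (t : nat -> R) (md : nat -> nat) (x : R -> nat -> R) : Prop :=
  (forall r, (r < n)%nat -> cont_from0 (fun s => x s r)) /\
  (forall k s, t k < s < t (S k) -> forall r, (r < n)%nat ->
     derivable_pt_lim (fun s' => x s' r) s
       (rsum n (fun c => cl_entry m A B U X (md k) (Rmin (s - t k) Tbar) r c
                          * x s c))).

Definition vnorm (n : nat) (v : nat -> R) : R := rsum n (fun r => Rabs (v r)).

Definition cl_positive n m A B U X Tbar t md : Prop :=
  forall x, cl_solution n m A B U X Tbar t md x ->
    (forall r, (r < n)%nat -> 0 <= x 0 r) ->
    forall s, 0 <= s -> forall r, (r < n)%nat -> 0 <= x s r.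

Definition cl_GAS n m A B U X Tbar t md : Prop :=
  (forall e, 0 < e -> exists d, 0 < d /\
     forall x, cl_solution n m A B U X Tbar t md x ->
       vnorm n (x 0) < d -> forall s, 0 <= s -> vnorm n (x s) < e) /\
  (forall x, cl_solution n m A B U X Tbar t md x ->
     forall e, 0 < e -> exists T0, forall s, T0 <= s -> vnorm n (x s) < e).

(* Main.v *)
Require Import Defs.
From Stdlib Require Import Reals Lra Lia Classical.
Open Scope R_scope.

Lemma rsum_ext n f g : (forall r, (r < n)%nat -> f r = g r) -> rsum n f = rsum n g.
Proof. induction n; simpl; intros H; auto. rewrite IHn by (intros; apply H; lia). rewrite H by lia. auto. Qed.

Lemma rsum_le n f g : (forall r, (r < n)%nat -> f r <= g r) -> rsum n f <= rsum n g.
Proof. induction n; simpl; intros H; [lra|]. assert (rsum n f <= rsum n g) by (apply IHn; intros; apply H; lia). specialize (H n ltac:(lia)). lra. Qed.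

Lemma rsum_plus n f g : rsum n (fun r => f r + g r) = rsum n f + rsum n g.
Proof. induction n; simpl; [lra|]. rewrite IHn. lra. Qed.

Lemma rsum_mulr n f a : rsum n f * a = rsum n (fun r => f r * a).
Proof. induction n; simpl; [lra|]. rewrite <- IHn. lra. Qed.

Lemma rsum_delta n r v : (r < n)%nat -> rsum n (fun c => if Nat.eqb r c then v else 0) = v.
Proof.
  induction n; simpl; intros H; [lia|].
  destruct (Nat.eqb r n) eqn:E.
  - apply Nat.eqb_eq in E; subst.
    assert (rsum n (fun c => if Nat.eqb n c then v else 0) = 0).
    { clear. assert (forall k, (k <= n)%nat -> rsum k (fun c => if Nat.eqb n c then v else 0) = 0).
      { induction k; simpl; intros; [lra|]. destruct (Nat.eqb n k) eqn:E; [apply Nat.eqb_eq in E; lia|].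
        rewrite IHk by lia. lra. }
      apply H; lia. }
    lra.
  - apply Nat.eqb_neq in E. rewrite IHn by lia. lra.
Qed.

Lemma fin_bound n (f : nat -> R) : exists M, forall r, (r < n)%nat -> f r <= M.
Proof.
  induction n.
  - exists 0. intros; lia.
  - destruct IHn as [M HM]. exists (Rmax M (f n)). intros r Hr.
    destruct (Nat.eq_dec r n); [subst; apply Rmax_r|].
    eapply Rle_trans; [apply HM; lia| apply Rmax_l].
Qed.

Lemma argmax n (f : nat -> R) : (0 < n)%nat -> exists r0, (r0 < n)%nat /\ forall r, (r < n)%nat -> f r <= f r0.
Proof.
  induction n; intros Hn; [lia|].
  destruct n.
  - exists 0%nat. split; [lia|]. intros r Hr. assert (r = 0%nat) by lia. subst; lra.
  - destruct IHn as [r0 [H1 H2]]; [lia|].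
    destruct (Rle_dec (f r0) (f (S n))) as [Hle|Hle].
    + exists (S n). split; [lia|]. intros r Hr. destruct (Nat.eq_dec r (S n)) as [->|]; [lra|].
      eapply Rle_trans; [apply H2; lia| lra].
    + exists r0. split; [lia|]. intros r Hr. destruct (Nat.eq_dec r (S n)) as [->|]; [lra|]. apply H2; lia.
Qed.

Lemma fin_delta n (S : R) (P : R -> Prop) (Q : nat -> R -> Prop) :
  (forall r, (r < n)%nat -> exists d, 0 < d /\ forall u, P u -> Rabs (u - S) < d -> Q r u) ->
  exists d, 0 < d /\ forall u, P u -> Rabs (u - S) < d -> forall r, (r < n)%nat -> Q r u.
Proof.
  induction n; intros H.
  - exists 1. split; [lra|]. intros; lia.
  - destruct IHn as [d1 [Hd1 H1]]; [intros; apply H; lia|].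
    destruct (H n ltac:(lia)) as [d2 [Hd2 H2]].
    exists (Rmin d1 d2). split; [apply Rmin_glb_lt; auto|].
    intros u Pu Hu r Hr.
    destruct (Nat.eq_dec r n); [subst; apply H2; auto; eapply Rlt_le_trans; [apply Hu| apply Rmin_r]|].
    apply H1; auto; [eapply Rlt_le_trans; [apply Hu| apply Rmin_l]| lia].
Qed.

Lemma left_pos (g : R -> R) S l : derivable_pt_lim g S l -> l < 0 -> g S = 0 ->
  exists d, 0 < d /\ forall u, S - d < u < S -> 0 < g u.
Proof.
  intros Hd Hl HS.
  destruct (Hd (- l / 2) ltac:(lra)) as [dl Hdl].
  exists dl. split; [apply cond_pos|]. intros u Hu.
  assert (Hh : u - S <> 0) by lra.
  assert (Ha : Rabs (u - S) < dl) by (rewrite Rabs_left; lra).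
  specialize (Hdl (u - S) Hh Ha).
  replace (S + (u - S)) with u in Hdl by ring. rewrite HS in Hdl.
  apply Rabs_def2 in Hdl. destruct Hdl as [Hq _].
  set (q := (g u - 0) / (u - S)) in *.
  assert (E : g u = q * (u - S)) by (unfold q; field; auto).
  rewrite E. nra.
Qed.

Lemma cont_comb a b (f g : R -> R) (h : R -> R) c :
  (forall v w, Rabs (h v - h w) <= Rabs (v - w)) ->
  cont_on a b f -> cont_on a b g -> cont_on a b (fun u => c * g u - h (f u)).
Proof.
  intros Hh Hf Hg s Hs e He.
  destruct (Hf s Hs (e/2) ltac:(lra)) as [d1 [Hd1 H1]].
  destruct (Hg s Hs (e/(2*(Rabs c + 1)))) as [d2 [Hd2 H2]].
  { apply Rdiv_lt_0_compat; [lra|]. pose proof (Rabs_pos c); lra. }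
  exists (Rmin d1 d2). split; [apply Rmin_glb_lt; auto|].
  intros y Hy Hyd.
  assert (A1 : Rabs (f y - f s) < e/2) by (apply H1; auto; eapply Rlt_le_trans; [apply Hyd|apply Rmin_l]).
  assert (A2 : Rabs (g y - g s) < e/(2*(Rabs c + 1))) by (apply H2; auto; eapply Rlt_le_trans; [apply Hyd|apply Rmin_r]).
  pose proof (Hh (f y) (f s)).
  assert (A3 : Rabs (c * (g y - g s)) <= Rabs c * (e / (2 * (Rabs c + 1)))).
  { rewrite Rabs_mult. apply Rmult_le_compat_l; [apply Rabs_pos|lra]. }
  assert (A4 : Rabs c * (e / (2 * (Rabs c + 1))) <= e/2).
  { pose proof (Rabs_pos c). apply Rmult_le_reg_r with (2*(Rabs c + 1)); [lra|].
    field_simplify; [|lra]. nra. }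
  replace (c * g y - h (f y) - (c * g s - h (f s))) with (c * (g y - g s) - (h (f y) - h (f s))) by ring.
  eapply Rle_lt_trans; [apply Rabs_triang|]. rewrite Rabs_Ropp. lra.
Qed.

Lemma pos_near a b F S : cont_on a b F -> a <= S <= b -> 0 < F S ->
  exists d, 0 < d /\ forall u, a <= u <= b -> Rabs (u - S) < d -> 0 < F u.
Proof.
  intros HF HS Hp. destruct (HF S HS (F S) Hp) as [d [Hd H]].
  exists d. split; auto. intros u Hu Hud. specialize (H u Hu Hud). apply Rabs_def2 in H. lra.
Qed.

Lemma closed_lim a b F : cont_on a b F -> a < b -> (forall u, a <= u < b -> 0 < F u) -> 0 <= F b.
Proof.
  intros HF Hab H. destruct (Rle_dec 0 (F b)) as [|Hn]; auto.
  destruct (HF b ltac:(lra) (- F b) ltac:(lra)) as [d [Hd Hc]].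
  set (u := Rmax a (b - d/2)).
  assert (Hu1 : a <= u) by apply Rmax_l.
  assert (Hu2 : u < b) by (unfold u; apply Rmax_lub_lt; lra).
  assert (Hu3 : b - d/2 <= u) by apply Rmax_r.
  specialize (Hc u ltac:(lra) ltac:(rewrite Rabs_left; lra)).
  specialize (H u ltac:(lra)). apply Rabs_def2 in Hc. lra.
Qed.

Definition IL_hyps (n : nat) (a b : R) (x Z : R -> nat -> R) (M : R -> nat -> nat -> R) (h : R -> R) : Prop :=
 a < b /\
 (forall s r, a <= s <= b -> (r<n)%nat -> 0 < Z s r) /\
 (forall r, (r<n)%nat -> cont_on a b (fun s => x s r)) /\
 (forall r, (r<n)%nat -> cont_on a b (fun s => Z s r)) /\
 (forall s r, a < s < b -> (r<n)%nat -> derivable_pt_lim (fun u => x u r) s (rsum n (fun c => M s r c * x s c))) /\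
 (forall s r c, a < s < b -> (r<n)%nat -> (c<n)%nat -> r <> c -> 0 <= M s r c) /\
 (forall s r, a < s < b -> (r<n)%nat -> exists Zf dz d, 0 < d /\ (forall u, s - d < u <= s -> Zf u = Z u r) /\ derivable_pt_lim Zf s dz /\ rsum n (fun c => M s r c * Z s c) - dz < 0) /\
 (forall v w, Rabs (h v - h w) <= Rabs (v - w)) /\
 (forall v, exists sg, sg * v = h v /\ forall w, sg * w <= h w).

Lemma IL_strict n a b x Z M h : IL_hyps n a b x Z M h ->
  forall cc, 0 < cc -> (forall r, (r<n)%nat -> h (x a r) < cc * Z a r) ->
  forall b', a <= b' < b -> forall s r, a <= s <= b' -> (r<n)%nat -> h (x s r) < cc * Z s r.
Proof.
  intros (Hab & HZ & Hxc & HZc & Hder & HMz & Hkey & Hh1 & Hh2) cc Hcc Ha b' Hb'.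
  set (good := fun u => forall r, (r<n)%nat -> h (x u r) < cc * Z u r).
  set (E := fun s => a <= s <= b' /\ forall u, a <= u <= s -> good u).
  assert (HEb : bound E) by (exists b'; intros s [Hs _]; lra).
  assert (HEa : exists s, E s) by (exists a; split; [lra| intros u Hu; replace u with a by lra; exact Ha]).
  destruct (completeness E HEb HEa) as [S [HS1 HS2]].
  assert (HaS : a <= S) by (apply HS1; split; [lra| intros u Hu; replace u with a by lra; exact Ha]).
  assert (HSb : S <= b') by (apply HS2; intros s [Hs _]; lra).
  assert (F1 : forall u, a <= u < S -> good u).
  { intros u Hu. apply NNPP; intros Hn.
    assert (S <= u); [|lra]. apply HS2. intros e [He1 He2].
    destruct (Rle_dec e u) as [|Hl]; auto. exfalso; apply Hn; apply He2; lra. }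
  assert (F2 : good S).
  { apply NNPP; intros Hn.
    destruct (Req_dec S a) as [->|HSa]; [apply Hn; exact Ha|].
    assert (HaS' : a < S) by lra.
    assert (Hex : exists r, (r<n)%nat /\ cc * Z S r <= h (x S r)).
    { apply NNPP; intros Hne. apply Hn. intros r Hr. apply Rnot_le_lt. intros Hle. apply Hne. exists r; auto. }
    destruct Hex as [r1 [Hr1 Hr1']].
    destruct (argmax n (fun r => h (x S r) / Z S r) ltac:(lia)) as [r0 [Hr0 Hmax]].
    set (lam := h (x S r0) / Z S r0).
    assert (HZS : forall r, (r<n)%nat -> 0 < Z S r) by (intros; apply HZ; auto; lra).
    assert (Hlc : cc <= lam).
    { eapply Rle_trans; [|apply (Hmax r1 Hr1)]. simpl. specialize (HZS r1 Hr1).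
      apply Rmult_le_reg_r with (Z S r1); auto. field_simplify; lra. }
    assert (Hbnd : forall r, (r<n)%nat -> h (x S r) <= lam * Z S r).
    { intros r Hr. specialize (Hmax r Hr). simpl in Hmax. specialize (HZS r Hr).
      apply Rmult_le_compat_r with (r := Z S r) in Hmax; [|lra].
      replace (h (x S r) / Z S r * Z S r) with (h (x S r)) in Hmax by (field; lra). exact Hmax. }
    assert (Heq : h (x S r0) = lam * Z S r0) by (unfold lam; field; specialize (HZS r0 Hr0); lra).
    destruct (Hh2 (x S r0)) as [sg [Hsg1 Hsg2]].
    destruct (Hkey S r0 ltac:(lra) Hr0) as (Zf & dz & d1 & Hd1 & HZf & HdZ & Hneg).
    assert (Hdg : derivable_pt_lim (fun u => sg * x u r0 - lam * Zf u) S
                   (sg * rsum n (fun c => M S r0 c * x S c) - lam * dz)).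
    { exact (derivable_pt_lim_minus _ _ _ _ _ (derivable_pt_lim_scal _ sg _ _ (Hder S r0 ltac:(lra) Hr0))
                                              (derivable_pt_lim_scal _ lam _ _ HdZ)). }
    assert (Hsum : sg * rsum n (fun c => M S r0 c * x S c) <= lam * rsum n (fun c => M S r0 c * Z S c)).
    { rewrite !(Rmult_comm sg), !(Rmult_comm lam), !rsum_mulr. apply rsum_le. intros c Hc.
      destruct (Nat.eq_dec r0 c) as [<-|Hne].
      - rewrite Rmult_assoc, (Rmult_comm (x S r0)), Hsg1, Heq. lra.
      - specialize (HMz S r0 c ltac:(lra) Hr0 Hc Hne). specialize (Hsg2 (x S c)). specialize (Hbnd c Hc).
        rewrite !Rmult_assoc. apply Rmult_le_compat_l; auto.
        rewrite (Rmult_comm (x S c)), (Rmult_comm (Z S c)). lra. }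
    assert (Hgneg : sg * rsum n (fun c => M S r0 c * x S c) - lam * dz < 0).
    { assert (0 < lam) by lra. nra. }
    assert (HgS : sg * x S r0 - lam * Zf S = 0).
    { rewrite HZf by lra. rewrite Hsg1, Heq. ring. }
    destruct (left_pos _ _ _ Hdg Hgneg HgS) as [d2 [Hd2 Hleft]].
    set (u := Rmax a (S - Rmin d1 d2 / 2)).
    assert (Hmin : 0 < Rmin d1 d2) by (apply Rmin_glb_lt; auto).
    assert (Hu1 : a <= u) by apply Rmax_l.
    assert (Hu2 : u < S) by (unfold u; apply Rmax_lub_lt; lra).
    assert (Hu3 : S - Rmin d1 d2 / 2 <= u) by apply Rmax_r.
    pose proof (Rmin_l d1 d2). pose proof (Rmin_r d1 d2).
    specialize (Hleft u ltac:(lra)). rewrite HZf in Hleft by lra.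
    specialize (F1 u ltac:(lra) r0 Hr0). specialize (Hsg2 (x u r0)).
    assert (0 < Z u r0) by (apply HZ; auto; lra).
    nra. }
  assert (F3 : S = b').
  { destruct (Req_dec S b') as [|Hne]; auto. exfalso.
    assert (HSb' : S < b') by lra.
    destruct (fin_delta n S (fun u => a <= u <= b) (fun r u => 0 < cc * Z u r - h (x u r))) as [d [Hd Hnear]].
    { intros r Hr. apply pos_near; [apply cont_comb; auto | lra | ].
      specialize (F2 r Hr). lra. }
    set (e := Rmin (S + d/2) b').
    assert (He1 : S < e) by (unfold e; apply Rmin_glb_lt; lra).
    assert (He2 : e <= S + d/2) by apply Rmin_l.
    assert (He3 : e <= b') by apply Rmin_r.
    assert (E e).
    { split; [lra|]. intros u Hu. destruct (Rlt_le_dec u S) as [Hl|Hl]; [apply F1; lra|].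
      destruct (Req_dec u S) as [->|Hne2]; auto.
      intros r Hr. specialize (Hnear u ltac:(lra) ltac:(rewrite Rabs_right; lra) r Hr). lra. }
    specialize (HS1 e H). lra. }
  intros s r Hs Hr. destruct (Rlt_le_dec s S) as [Hl|Hl]; [apply F1; auto; lra|].
  replace s with S by lra. apply F2; auto.
Qed.

Lemma IL n a b x Z M h : IL_hyps n a b x Z M h ->
  forall cc, 0 <= cc -> (forall r, (r<n)%nat -> h (x a r) <= cc * Z a r) ->
  forall s r, a <= s <= b -> (r<n)%nat -> h (x s r) <= cc * Z s r.
Proof.
  intros HIL cc Hcc Ha s r Hs Hr.
  pose proof HIL as (Hab & HZ & Hxc & HZc & _ & _ & _ & Hh1 & _).
  assert (Hstr : forall c', cc < c' -> h (x s r) <= c' * Z s r).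
  { intros c' Hc'.
    assert (Ha' : forall r, (r<n)%nat -> h (x a r) < c' * Z a r).
    { intros r' Hr'. specialize (Ha r' Hr'). assert (0 < Z a r') by (apply HZ; auto; lra). nra. }
    destruct (Rlt_le_dec s b) as [Hsb|Hsb].
    - left. apply (IL_strict n a b x Z M h HIL c' ltac:(lra) Ha' s ltac:(lra) s r ltac:(lra) Hr).
    - replace s with b by lra.
      assert (0 <= c' * Z b r - h (x b r)); [|lra].
      apply (closed_lim a b (fun u => c' * Z u r - h (x u r))); auto.
      + apply cont_comb; auto.
      + intros u Hu. assert (h (x u r) < c' * Z u r); [|lra]. apply (IL_strict n a b x Z M h HIL c' ltac:(lra) Ha' u ltac:(lra) u r ltac:(lra) Hr). }
  assert (HZs : 0 < Z s r) by (apply HZ; auto).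
  destruct (Rle_dec (h (x s r)) (cc * Z s r)) as [|Hn]; auto. exfalso.
  set (c' := cc + (h (x s r) - cc * Z s r) / (2 * Z s r)).
  assert (Hpos : 0 < (h (x s r) - cc * Z s r) / (2 * Z s r)) by (apply Rdiv_lt_0_compat; lra).
  specialize (Hstr c' ltac:(unfold c'; lra)). unfold c' in Hstr.
  rewrite Rmult_plus_distr_r in Hstr.
  replace ((h (x s r) - cc * Z s r) / (2 * Z s r) * Z s r) with ((h (x s r) - cc * Z s r) / 2) in Hstr by (field; lra).
  lra.
Qed.

Lemma cont_pt_ed f x0 : continuity_pt f x0 -> forall e, 0 < e -> exists d, 0 < d /\ forall y, Rabs (y - x0) < d -> Rabs (f y - f x0) < e.
Proof.
  intros H e He. destruct (H e He) as [d [Hd Hy]]. exists d. split; [lra|].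
  intros y Hyd. destruct (Req_dec y x0) as [->|Hne]; [rewrite Rminus_diag, Rabs_R0; lra|].
  apply (Hy y). split; [split; [exact I| auto]| exact Hyd].
Qed.

Lemma Rmin_lip u s T Tb : Rabs (Rmin (u - T) Tb - Rmin (s - T) Tb) <= Rabs (u - s).
Proof.
  unfold Rmin; destruct (Rle_dec (u - T) Tb); destruct (Rle_dec (s - T) Tb);
  unfold Rabs; destruct (Rcase_abs _); destruct (Rcase_abs _); lra.
Qed.

Lemma vnorm_ge n v r : (r < n)%nat -> Rabs (v r) <= vnorm n v.
Proof.
  unfold vnorm. induction n; simpl; intros H; [lia|].
  assert (0 <= rsum n (fun r => Rabs (v r))).
  { clear. induction n; simpl; [lra|]. pose proof (Rabs_pos (v n)). lra. }
  destruct (Nat.eq_dec r n) as [->|]; [lra|]. specialize (IHn ltac:(lia)). pose proof (Rabs_pos (v n)). lra.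
Qed.

Lemma vnorm_le n v B : (forall r, (r < n)%nat -> Rabs (v r) <= B) -> vnorm n v <= INR n * B.
Proof.
  unfold vnorm. induction n; intros H; simpl rsum; [simpl; lra|].
  rewrite S_INR. specialize (IHn ltac:(intros; apply H; lia)). specialize (H n ltac:(lia)). lra.
Qed.

Lemma pow_le1 p k : 0 <= p <= 1 -> p ^ k <= 1.
Proof. intros H; induction k; simpl; [lra|]. pose proof (pow_le p k ltac:(lra)). nra. Qed.

Lemma fin_ub n (P : nat -> R -> Prop) : (forall r, (r < n)%nat -> exists M, P r M) ->
  (forall r M M', P r M -> M <= M' -> P r M') -> exists M, forall r, (r < n)%nat -> P r M.
Proof.
  intros H Hm. induction n.
  - exists 0. intros; lia.
  - destruct IHn as [M1 H1]; [intros; apply H; lia|]. destruct (H n ltac:(lia)) as [M2 H2].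
    exists (Rmax M1 M2). intros r Hr. destruct (Nat.eq_dec r n) as [->|].
    + eapply Hm; [exact H2| apply Rmax_r].
    + eapply Hm; [apply H1; lia| apply Rmax_l].
Qed.

Lemma t_mono (t : nat -> R) : (forall k, t k < t (S k)) -> forall i j, (i <= j)%nat -> t i <= t j.
Proof. intros H i j Hij. induction Hij; [lra|]. specialize (H m). lra. Qed.

Lemma cover (t : nat -> R) : (forall k, t k < t (S k)) -> (forall M, exists k, M < t k) ->
  forall s K, t K <= s -> exists k, (K <= k)%nat /\ t k <= s <= t (S k).
Proof.
  intros Hinc Hunb s K HK. destruct (Hunb s) as [J HJ].
  revert HJ. induction J; intros HJ.
  - pose proof (t_mono t Hinc 0 K ltac:(lia)). lra.
  - destruct (Rlt_le_dec s (t J)) as [Hl|Hl]; [apply IHJ; auto|].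
    exists J. split; [|lra].
    destruct (Compare_dec.le_lt_dec K J) as [|Hlt]; auto.
    pose proof (t_mono t Hinc (S J) K ltac:(lia)). lra.
Qed.

Lemma cl_mul m A B U X i tau r c : X i tau c <> 0 ->
  cl_entry m A B U X i tau r c * X i tau c = A i r c * X i tau c + rsum m (fun l => B i r l * U i tau l c).
Proof.
  intros H. unfold cl_entry, Kgain. rewrite Rmult_plus_distr_r, rsum_mulr. f_equal.
  apply rsum_ext. intros. field. auto.
Qed.

Lemma vnorm_pos n v : 0 <= vnorm n v.
Proof. unfold vnorm. induction n; simpl; [lra|]. pose proof (Rabs_pos (v n)). lra. Qed.

Theorem corollary5 (n m N : nat) (A B : nat -> nat -> nat -> R)
  (X dX : nat -> R -> nat -> R) (U : nat -> R -> nat -> nat -> R)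
  (Tbar eps alpha : R) :
  0 < Tbar -> 0 < eps -> 0 < alpha ->
  (forall i r, (i < N)%nat -> (r < n)%nat -> forall tau, 0 <= tau <= Tbar ->
     derivable_pt_lim (fun s => X i s r) tau (dX i tau r)) ->
  (forall i r, (i < N)%nat -> (r < n)%nat -> cont_on 0 Tbar (fun s => dX i s r)) ->
  (forall i r, (i < N)%nat -> (r < n)%nat -> forall tau, 0 <= tau <= Tbar ->
     X i tau r <> 0) ->
  (forall i r, (i < N)%nat -> (r < n)%nat -> 0 < X i Tbar r) ->
  (forall i l c, (i < N)%nat -> (l < m)%nat -> (c < n)%nat ->
     cont_on 0 Tbar (fun s => U i s l c)) ->
  (forall i, (i < N)%nat -> forall tau, 0 <= tau <= Tbar ->
     forall r c, (r < n)%nat -> (c < n)%nat ->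
       0 <= A i r c * X i tau c + rsum m (fun l => B i r l * U i tau l c)
            + (if Nat.eqb r c then alpha else 0)) ->
  (forall i r, (i < N)%nat -> (r < n)%nat ->
     rsum n (fun c => A i r c * X i Tbar c
                      + rsum m (fun l => B i r l * U i Tbar l c)) < 0) ->
  (forall i, (i < N)%nat -> forall tau, 0 <= tau <= Tbar ->
     forall r, (r < n)%nat ->
       rsum n (fun c => (if Nat.eqb r c then - dX i tau r else 0)
                        + A i r c * X i tau c
                        + rsum m (fun l => B i r l * U i tau l c)) < 0) ->
  (forall i j, (i < N)%nat -> (j < N)%nat -> i <> j ->
     forall r, (r < n)%nat -> X j Tbar r - X i 0 r + eps <= 0) ->
  forall (t : nat -> R) (md : nat -> nat), dwell_switching N Tbar t md ->
    cl_positive n m A B U X Tbar t md /\ cl_GAS n m A B U X Tbar t md.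
Proof.
  intros HT He Ha HdX HdXc HXnz HXT HUc Hmetz HTneg HdXneg Hsw t md Hds.
  destruct Hds as (Ht0 & Hmd & Hnsw & Hinc & Hunb & Hdw).
  assert (Htk : forall k, 0 <= t k) by (intro k; rewrite <- Ht0; apply t_mono; auto; lia).
  assert (Xcont : forall i r, (i<N)%nat -> (r<n)%nat -> forall tau, 0 <= tau <= Tbar ->
            continuity_pt (fun s => X i s r) tau).
  { intros i r Hi Hr tau Htau. apply derivable_continuous_pt.
    exact (exist _ (dX i tau r) (HdX i r Hi Hr tau Htau)). }
  assert (Xpos : forall i r, (i<N)%nat -> (r<n)%nat -> forall tau, 0 <= tau <= Tbar -> 0 < X i tau r).
  { intros i r Hi Hr tau Htau. destruct (Rlt_le_dec 0 (X i tau r)) as [|Hle]; auto. exfalso.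
    assert (Hneg : X i tau r < 0) by (pose proof (HXnz i r Hi Hr tau Htau); lra).
    destruct (Req_dec tau Tbar) as [->|Hne]; [pose proof (HXT i r Hi Hr); lra|].
    destruct (Ranalysis5.IVT_interv (fun s => X i s r) tau Tbar) as [z [Hz1 Hz2]].
    - intros a Ha'. apply Xcont; auto; lra.
    - lra.
    - exact Hneg.
    - apply HXT; auto.
    - apply (HXnz i r Hi Hr z); auto; lra. }
  assert (HZm : exists Zm, eps <= Zm /\ forall i r, (i<N)%nat -> (r<n)%nat ->
             forall tau, 0 <= tau <= Tbar -> X i tau r <= Zm).
  { destruct (fin_ub N (fun i M => forall r, (r<n)%nat -> forall tau, 0 <= tau <= Tbar -> X i tau r <= M)) as [M1 HM1].
    - intros i Hi. apply (fin_ub n (fun r M => forall tau, 0 <= tau <= Tbar -> X i tau r <= M)).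
      + intros r Hr. destruct (continuity_ab_maj (fun s => X i s r) 0 Tbar ltac:(lra)
                       (fun c Hc => Xcont i r Hi Hr c Hc)) as [Mx [HMx _]].
        exists (X i Mx r). intros; apply HMx; auto.
      + intros r M M' H1 H2 tau Ht. specialize (H1 tau Ht); lra.
    - intros i M M' H1 H2 r Hr tau Ht. specialize (H1 r Hr tau Ht). lra.
    - exists (Rmax M1 eps). split; [apply Rmax_r|]. intros.
      eapply Rle_trans; [apply HM1; auto| apply Rmax_l]. }
  destruct HZm as [Zm [HZm1 HZm2]].
  assert (HX0 : forall r, (r<n)%nat -> eps <= X (md 0%nat) 0 r).
  { intros r Hr. pose proof (Hsw (md 0%nat) (md 1%nat) (Hmd 0%nat) (Hmd 1%nat) (fun e => Hnsw 0%nat (eq_sym e)) r Hr).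
    pose proof (Xpos (md 1%nat) r (Hmd 1%nat) Hr Tbar ltac:(lra)). lra. }
  assert (Hinst : forall x, cl_solution n m A B U X Tbar t md x ->
     forall h, (forall v w, Rabs (h v - h w) <= Rabs (v - w)) ->
     (forall v, exists sg, sg * v = h v /\ forall w, sg * w <= h w) ->
     forall k, IL_hyps n (t k) (t (S k)) x (fun s r => X (md k) (Rmin (s - t k) Tbar) r)
                 (fun s r c => cl_entry m A B U X (md k) (Rmin (s - t k) Tbar) r c) h).
  { intros x [Hxc Hxd] h Hh1 Hh2 k.
    assert (Hi : (md k < N)%nat) by apply Hmd.
    assert (Hrng : forall s, t k <= s -> 0 <= Rmin (s - t k) Tbar <= Tbar).
    { intros s Hs. split; [apply Rmin_glb; lra| apply Rmin_r]. }
    unfold IL_hyps.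
    split; [apply Hinc|].
    split; [intros s r Hs Hr; apply Xpos; auto; apply Hrng; lra|].
    split.
    { intros r Hr s Hs e He'. destruct (Hxc r Hr s ltac:(pose proof (Htk k); lra) e He') as [d [Hd H]].
      exists d. split; auto. intros y Hy Hyd. apply H; auto. pose proof (Htk k); lra. }
    split.
    { intros r Hr s Hs e He'.
      destruct (cont_pt_ed _ _ (Xcont (md k) r Hi Hr _ (Hrng s ltac:(lra))) e He') as [d [Hd H]].
      exists d; split; auto. intros y Hy Hyd. apply H. eapply Rle_lt_trans; [apply Rmin_lip| exact Hyd]. }
    split.
    { intros s r Hs Hr. apply Hxd; auto. }
    split.
    { intros s r c Hs Hr Hc Hne.
      pose proof (Hmetz (md k) Hi (Rmin (s - t k) Tbar) (Hrng s ltac:(lra)) r c Hr Hc) as Hm.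
      destruct (Nat.eqb r c) eqn:E; [apply Nat.eqb_eq in E; contradiction|].
      rewrite <- cl_mul in Hm by (apply HXnz; auto; apply Hrng; lra).
      pose proof (Xpos (md k) c Hi Hc _ (Hrng s ltac:(lra))).
      destruct (Rlt_le_dec (cl_entry m A B U X (md k) (Rmin (s - t k) Tbar) r c) 0); nra. }
    split.
    { intros s r Hs Hr.
      assert (Hsum : forall tau, 0 <= tau <= Tbar ->
        rsum n (fun c => cl_entry m A B U X (md k) tau r c * X (md k) tau c) =
        rsum n (fun c => A (md k) r c * X (md k) tau c + rsum m (fun l => B (md k) r l * U (md k) tau l c))).
      { intros tau Htau. apply rsum_ext. intros c Hc. apply cl_mul. apply HXnz; auto. }
      destruct (Rle_dec (s - t k) Tbar) as [Hle|Hgt].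
      - exists (fun u => X (md k) (u - t k) r), (dX (md k) (s - t k) r), (s - t k).
        split; [lra|]. split.
        + intros u Hu. rewrite (Rmin_left (u - t k) Tbar) by lra. reflexivity.
        + split.
          * assert (D1 : derivable_pt_lim (fun u => u - t k) s 1).
            { replace 1 with (1 - 0) by ring.
              exact (derivable_pt_lim_minus id (fct_cte (t k)) s 1 0 (derivable_pt_lim_id s) (derivable_pt_lim_const (t k) s)). }
            pose proof (derivable_pt_lim_comp (fun u => u - t k) (fun v => X (md k) v r) s 1 (dX (md k) (s - t k) r) D1
                          (HdX (md k) r Hi Hr (s - t k) ltac:(lra))) as D2.
            rewrite Rmult_1_r in D2. exact D2.
          * rewrite (Rmin_left (s - t k) Tbar) by lra. rewrite Hsum by lra.
            specialize (HdXneg (md k) Hi (s - t k) ltac:(lra) r Hr).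
            rewrite !rsum_plus, rsum_delta in HdXneg by auto. rewrite rsum_plus. lra.
      - exists (fun _ => X (md k) Tbar r), 0, (s - t k - Tbar). split; [lra|]. split.
        + intros u Hu. rewrite (Rmin_right (u - t k) Tbar) by lra. reflexivity.
        + split; [exact (derivable_pt_lim_const _ _)|].
          rewrite (Rmin_right (s - t k) Tbar) by lra. rewrite Hsum by lra.
          specialize (HTneg (md k) r Hi Hr). lra. }
    split; auto. }

  assert (Hopp1 : forall v w, Rabs (- v - - w) <= Rabs (v - w)).
  { intros. replace (-v - -w) with (-(v-w)) by ring. rewrite Rabs_Ropp; lra. }
  assert (Hopp2 : forall v, exists sg, sg * v = - v /\ forall w, sg * w <= - w).
  { intros. exists (-1). split; intros; lra. }
  assert (Habs2 : forall v, exists sg, sg * v = Rabs v /\ forall w, sg * w <= Rabs w).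
  { intros v. destruct (Rle_dec 0 v).
    - exists 1. split; [rewrite Rabs_right; lra|]. intros w. pose proof (Rle_abs w); lra.
    - exists (-1). split; [rewrite Rabs_left; lra|]. intros w. pose proof (Rle_abs (-w)) as H.
      rewrite Rabs_Ropp in H; lra. }
  split.
  { intros x Hx Hx0 s Hs r Hr.
    assert (Hk : forall k r, (r<n)%nat -> 0 <= x (t k) r).
    { induction k; intros r' Hr'; [rewrite Ht0; auto|].
      pose proof (IL _ _ _ _ _ _ _ (Hinst x Hx (fun v => -v) Hopp1 Hopp2 k) 0 (Rle_refl 0)
        ltac:(intros r2 Hr2; specialize (IHk r2 Hr2); simpl; lra) (t (S k)) r'
        ltac:(pose proof (Hinc k); lra) Hr') as H. simpl in H. lra. }
    destruct (cover t Hinc Hunb s 0 ltac:(rewrite Ht0; lra)) as [k [_ Hk2]].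
    pose proof (IL _ _ _ _ _ _ _ (Hinst x Hx (fun v => -v) Hopp1 Hopp2 k) 0 (Rle_refl 0)
        ltac:(intros r2 Hr2; specialize (Hk k r2 Hr2); simpl; lra) s r Hk2 Hr) as H. simpl in H. lra. }
  assert (HE : eps / Zm * Zm = eps) by (field; lra).
  assert (HEp : 0 < eps / Zm) by (apply Rdiv_lt_0_compat; lra).
  set (rho := 1 - eps / Zm).
  assert (Hrho : 0 <= rho < 1) by (unfold rho; split; nra).
  assert (Hdec : forall x, cl_solution n m A B U X Tbar t md x -> forall c0, 0 <= c0 ->
     (forall r, (r<n)%nat -> Rabs (x 0 r) <= c0 * X (md 0%nat) 0 r) ->
     forall k r, (r<n)%nat -> Rabs (x (t k) r) <= c0 * rho ^ k * X (md k) 0 r).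
  { intros x Hx c0 Hc0 H0 k. induction k; intros r Hr.
    - rewrite Ht0. simpl. rewrite Rmult_1_r. auto.
    - assert (Hc : 0 <= c0 * rho ^ k) by (apply Rmult_le_pos; auto; apply pow_le; lra).
      pose proof (IL _ _ _ _ _ _ _ (Hinst x Hx Rabs Rabs_triang_inv2 Habs2 k) (c0 * rho^k) Hc) as HIL.
      specialize (HIL ltac:(intros r2 Hr2; simpl; replace (t k - t k) with 0 by ring;
                            rewrite Rmin_left by lra; apply IHk; auto)
                      (t (S k)) r ltac:(pose proof (Hinc k); lra) Hr).
      simpl in HIL. rewrite (Rmin_right (t (S k) - t k) Tbar) in HIL by (specialize (Hdw k); lra).
      pose proof (Hsw (md (S k)) (md k) (Hmd _) (Hmd _) (Hnsw k) r Hr) as Hs1.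
      pose proof (HZm2 (md (S k)) r (Hmd _) Hr 0 ltac:(lra)) as Hs2.
      assert (Hk2 : X (md k) Tbar r <= rho * X (md (S k)) 0 r).
      { unfold rho. assert (eps / Zm * X (md (S k)) 0 r <= eps) by nra. nra. }
      assert (c0 * rho ^ k * X (md k) Tbar r <= c0 * rho^k * (rho * X (md (S k)) 0 r))
        by (apply Rmult_le_compat_l; auto).
      simpl. replace (c0 * (rho * rho ^ k) * X (md (S k)) 0 r) with (c0 * rho ^ k * (rho * X (md (S k)) 0 r)) by ring.
      lra. }
  assert (Hall : forall x, cl_solution n m A B U X Tbar t md x -> forall c0, 0 <= c0 ->
     (forall r, (r<n)%nat -> Rabs (x 0 r) <= c0 * X (md 0%nat) 0 r) ->
     forall k s, t k <= s <= t (S k) -> vnorm n (x s) <= INR n * (c0 * rho ^ k * Zm)).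
  { intros x Hx c0 Hc0 H0 k s Hs. apply vnorm_le. intros r Hr.
    assert (Hc : 0 <= c0 * rho ^ k) by (apply Rmult_le_pos; auto; apply pow_le; lra).
    pose proof (IL _ _ _ _ _ _ _ (Hinst x Hx Rabs Rabs_triang_inv2 Habs2 k) (c0 * rho^k) Hc
       ltac:(intros r2 Hr2; simpl; replace (t k - t k) with 0 by ring;
             rewrite Rmin_left by lra; apply Hdec; auto) s r Hs Hr) as HIL.
    simpl in HIL. eapply Rle_trans; [exact HIL|]. apply Rmult_le_compat_l; [exact Hc|].
    apply HZm2; auto. split; [apply Rmin_glb; lra| apply Rmin_r]. }
  assert (HP : 0 <= INR n * Zm) by (apply Rmult_le_pos; [apply pos_INR| lra]).
  split.
  - intros e He'. set (P := INR n * Zm) in *.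
    assert (HEe : e / (P + 1) * (P + 1) = e) by (field; lra).
    assert (Hc0 : 0 < e / (P + 1)) by (apply Rdiv_lt_0_compat; lra).
    exists (e / (P + 1) * eps). split; [nra|].
    intros x Hx Hd s Hs.
    assert (H0 : forall r, (r<n)%nat -> Rabs (x 0 r) <= e / (P + 1) * X (md 0%nat) 0 r).
    { intros r Hr. pose proof (vnorm_ge n (x 0) r Hr). pose proof (HX0 r Hr). nra. }
    destruct (cover t Hinc Hunb s 0 ltac:(rewrite Ht0; lra)) as [k [_ Hk2]].
    pose proof (Hall x Hx _ (Rlt_le _ _ Hc0) H0 k s Hk2) as Hb.
    pose proof (pow_le1 rho k ltac:(lra)). pose proof (pow_le rho k ltac:(lra)).
    assert (INR n * (e / (P + 1) * rho ^ k * Zm) <= e / (P + 1) * P).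
    { replace (INR n * (e / (P + 1) * rho ^ k * Zm)) with (e / (P + 1) * P * rho ^ k) by (unfold P; ring).
      assert (0 <= e / (P + 1) * P) by nra. nra. }
    nra.
  - intros x Hx e He'.
    set (c0 := vnorm n (x 0) / eps).
    assert (Hc0 : 0 <= c0) by (apply Rmult_le_pos; [apply vnorm_pos| left; apply Rinv_0_lt_compat; lra]).
    assert (Hc0e : c0 * eps = vnorm n (x 0)) by (unfold c0; field; lra).
    assert (H0 : forall r, (r<n)%nat -> Rabs (x 0 r) <= c0 * X (md 0%nat) 0 r).
    { intros r Hr. pose proof (vnorm_ge n (x 0) r Hr). pose proof (HX0 r Hr). nra. }
    set (Q := INR n * c0 * Zm).
    assert (HQ : 0 <= Q) by (unfold Q; apply Rmult_le_pos; [apply Rmult_le_pos; [apply pos_INR|auto]|lra]).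
    assert (Hy : 0 < e / (Q + 1)) by (apply Rdiv_lt_0_compat; lra).
    assert (HyE : e / (Q + 1) * (Q + 1) = e) by (field; lra).
    destruct (pow_lt_1_zero rho ltac:(rewrite Rabs_right; lra) _ Hy) as [K HK].
    exists (t K). intros s Hs.
    destruct (cover t Hinc Hunb s K Hs) as [k [HKk Hk2]].
    pose proof (Hall x Hx c0 Hc0 H0 k s Hk2) as Hb.
    specialize (HK k HKk). pose proof (pow_le rho k ltac:(lra)).
    rewrite Rabs_right in HK by lra.
    replace (INR n * (c0 * rho ^ k * Zm)) with (Q * rho ^ k) in Hb by (unfold Q; ring).
    assert (Q * rho ^ k <= Q * (e / (Q + 1))) by (apply Rmult_le_compat_l; lra).
    nra.
Qed.
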